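(* There exists a finite-state deep sequence $S\in\{0,1\}^\infty$.
   Context: A finite-state transducer (FST) is a 4-tuple $T=(Q,\delta,\nu,q_0)$ with $Q$ a nonempty finite set of states, $\delta:Q\times\{0,1\}\to Q$, $\nu:Q\times\{0,1\}\to\{0,1\}^*$, $q_0\in Q$, every state reachable from $q_0$; $\widehat\delta(\lambda)=q_0$, $\widehat\delta(xa)=\delta(\widehat\delta(x),a)$, $T(\lambda)=\lambda$, $T(xa)=T(x)\nu(\widehat\delta(x),a)$. Fix a standard binary representation $\sigma_T$ of each FST, $|T|=|\sigma_T|$, $\mathrm{FST}^{\leq k}=\{T:|T|\le k\}$, and $\mathrm{FS}^k(x)=\min\{|p|:\exists T\in\mathrm{FST}^{\le k},\ T(p)=x\}$. For a sequence $S$, $S\upharpoonright n$ is its first $n$ bits. $S$ is finite-state deep if $(\exists\alpha>0)(\forall k\in\mathbb{N})(\exists k'\in\mathbb{N})(\exists^\infty n\in\mathbb{N})\ \mathrm{FS}^k(S\upharpoonright n)-\mathrm{FS}^{k'}(S\upharpoonright n)\ge\alpha n$. *)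

(* Defs.v *)
From Stdlib Require Import List Arith Reals ClassicalEpsilon.
Import ListNotations.
Open Scope R_scope.

(** States are the naturals 0 .. nq-1; [dl] is delta, [nu] is the output
    function, [q0] the start state.  Values of [dl]/[nu] on non-states are
    irrelevant junk; well-formedness is the predicate [FST_ok]. *)
Record FST := mkFST {
  nq : nat;
  dl : nat -> bool -> nat;
  nu : nat -> bool -> list bool;
  q0 : nat
}.

Definition dhat (T : FST) (x : list bool) : nat :=
  fold_left (fun q a => dl T q a) x (q0 T).

Fixpoint run_from (T : FST) (q : nat) (x : list bool) : list bool :=
  match x with
  | [] => []
  | a :: x' => nu T q a ++ run_from T (dl T q a) x'
  end.

Definition run (T : FST) (x : list bool) : list bool := run_from T (q0 T) x.

Definition FST_ok (T : FST) : Prop :=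
  (0 < nq T)%nat /\ (q0 T < nq T)%nat /\
  (forall q a, (q < nq T)%nat -> (dl T q a < nq T)%nat) /\
  (forall q, (q < nq T)%nat -> exists x, dhat T x = q).

Definition enc_nat (n : nat) : list bool := repeat true n ++ [false].
Definition enc_bits (s : list bool) : list bool := enc_nat (length s) ++ s.
Definition sigma (T : FST) : list bool :=
  enc_nat (nq T) ++ enc_nat (q0 T) ++
  flat_map (fun q => enc_nat (dl T q false) ++ enc_bits (nu T q false) ++
                     enc_nat (dl T q true) ++ enc_bits (nu T q true))
           (seq 0 (nq T)).

Definition FST_size (T : FST) : nat := length (sigma T).

Definition FS_len (k : nat) (x : list bool) (m : nat) : Prop :=
  exists T p, FST_ok T /\ (FST_size T <= k)%nat /\ run T p = x /\ length p = m.

(** FS^k(x) : the minimum, or None (= +infinity) if the set is empty. *)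
Definition FS (k : nat) (x : list bool) : option nat :=
  match excluded_middle_informative (exists m, FS_len k x m) with
  | left _ => Some (epsilon (inhabits 0%nat)
                     (fun m => FS_len k x m /\ forall m', FS_len k x m' -> (m <= m')%nat))
  | right _ => None
  end.

Definition prefix (S : nat -> bool) (n : nat) : list bool := map S (seq 0 n).

(** FS^k(x) - FS^{k'}(x) >= alpha * n, with +infinity - finite = +infinity;
    undefined/-infinity differences count as false. *)
Definition FS_gap_ge (k k' : nat) (x : list bool) (b : R) : Prop :=
  match FS k x, FS k' x with
  | Some a, Some a' => INR a - INR a' >= b
  | None, Some _ => True
  | _, None => False
  end.

Definition fs_deep (S : nat -> bool) : Prop :=
  exists alpha : R, alpha > 0 /\
    forall k : nat, exists k' : nat,
      forall N : nat, exists n : nat, (n >= N)%nat /\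
        FS_gap_ge k k' (prefix S n) (alpha * INR n).

(* Main.v *)
Require Import Defs.
From Stdlib Require Import List Arith Lia Lra Reals ClassicalEpsilon Classical.
Import ListNotations.
Local Open Scope nat_scope.


Definition dfold (T : FST) (q : nat) (x : list bool) : nat :=
  fold_left (fun q a => dl T q a) x q.

Lemma run_from_app T q x y :
  run_from T q (x ++ y) = run_from T q x ++ run_from T (dfold T q x) y.
Proof.
  revert q; induction x as [|a x IH]; intro q; simpl; [reflexivity|].
  rewrite IH, app_assoc. reflexivity.
Qed.

Lemma dfold_lt T q x : FST_ok T -> q < nq T -> dfold T q x < nq T.
Proof.
  intros [_ [_ [H _]]]. revert q; induction x as [|a x IH]; intros q Hq; simpl; auto.
Qed.

Lemma len_flat_map_in {A B} (f : A -> list B) l x :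
  In x l -> length (f x) <= length (flat_map f l).
Proof.
  induction l as [|y l IH]; simpl; [tauto|]. rewrite length_app.
  intros [->|H]; [lia|]. specialize (IH H); lia.
Qed.

Lemma nq_le_size T : nq T < FST_size T.
Proof. unfold FST_size, Defs.sigma, enc_nat. rewrite !length_app. rewrite repeat_length. simpl. lia. Qed.

Lemma nu_le_size T q a : q < nq T -> length (nu T q a) <= FST_size T.
Proof.
  intro Hq. unfold FST_size, Defs.sigma.
  rewrite !length_app.
  assert (Hin : In q (seq 0 (nq T))) by (apply in_seq; lia).
  pose proof (len_flat_map_in (fun q => enc_nat (dl T q false) ++ enc_bits (nu T q false) ++
                     enc_nat (dl T q true) ++ enc_bits (nu T q true)) _ _ Hin) as H.
  simpl in H. rewrite !length_app in H. unfold enc_bits in H. rewrite !length_app in H.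
  unfold enc_bits. destruct a; lia.
Qed.


Lemma split_run (k : nat) (T : FST) (Hok : FST_ok T) (Hsz : FST_size T <= k) : forall p q N, q < nq T -> N <= length (run_from T q p) ->
  exists p1 p2, p = p1 ++ p2 /\ N <= length (run_from T q p1) <= N + k.
Proof.
  induction p as [|a p IH]; intros q N Hq HN.
  - exists [], []. simpl in *. split; [reflexivity|lia].
  - destruct N as [|N].
    + exists [], (a :: p). simpl. split; [reflexivity|lia].
    + pose proof (nu_le_size T q a Hq) as Hnu.
      destruct (le_lt_dec (S N) (length (nu T q a))) as [Hle|Hlt].
      * exists [a], p. simpl. rewrite app_nil_r. split; [reflexivity|lia].
      * simpl in HN. rewrite length_app in HN.
        assert (Hq' : dl T q a < nq T) by (destruct Hok as [_ [_ [H _]]]; auto).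
        destruct (IH (dl T q a) (S N - length (nu T q a)) Hq') as [p1 [p2 [E H]]]; [lia|].
        exists (a :: p1), p2. subst p. simpl. rewrite length_app. split; [reflexivity|lia].
Qed.

Definition good (k : nat) (h : nat) (w : list bool) : Prop :=
  forall T q u d, FST_ok T -> FST_size T <= k -> q < nq T -> d <= k ->
    firstn (length w - d) (run_from T q u) = skipn d w -> h <= length u.

Lemma main_lb (k : nat) (T : FST) (Hok : FST_ok T) (Hsz : FST_size T <= k) h w : good k h w -> k < length w -> forall r p q d z, q < nq T -> d <= k ->
  run_from T q p = skipn d (concat (repeat w r) ++ z) -> r * h <= length p.
Proof.
  intros Hg HL. induction r as [|r IH]; intros p q d z Hq Hd E; [simpl; lia|].
  set (L := length w) in *.
  simpl in E. rewrite <- app_assoc, skipn_app in E. fold L in E.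
  replace (d - L) with 0 in E by lia. rewrite skipn_O in E.
  assert (HN : L - d <= length (run_from T q p)).
  { rewrite E, length_app, length_skipn. fold L. lia. }
  destruct (split_run k T Hok Hsz p q (L - d) Hq HN) as [p1 [p2 [-> Hb]]].
  rewrite run_from_app in E.
  assert (Hh : h <= length p1).
  { apply (Hg T q p1 d Hok Hsz Hq Hd). fold L.
    assert (H2 := f_equal (firstn (L - d)) E).
    rewrite firstn_app in H2. replace (L - d - length (run_from T q p1)) with 0 in H2 by lia.
    rewrite firstn_O, app_nil_r in H2. rewrite H2.
    rewrite firstn_app, length_skipn. fold L. rewrite Nat.sub_diag, firstn_O, app_nil_r.
    apply firstn_all2. rewrite length_skipn. fold L. lia. }
  assert (E2 := f_equal (skipn (length (run_from T q p1))) E).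
  rewrite skipn_app, Nat.sub_diag, skipn_O, skipn_all in E2. simpl in E2.
  rewrite skipn_app, length_skipn in E2. fold L in E2.
  rewrite skipn_all2 in E2 by (rewrite length_skipn; fold L; lia). simpl in E2.
  assert (Hq2 : dfold T q p1 < nq T) by (apply dfold_lt; auto).
  pose proof (IH p2 _ _ z Hq2 (ltac:(lia) : length (run_from T q p1) - (L - d) <= k) E2).
  rewrite length_app. simpl. lia.
Qed.




Definition Entry := (nat * list bool * nat * list bool)%type.
Definition e0 : Entry := (0, [], 0, []).
Definition tdl (tb : list Entry) q (a : bool) : nat :=
  match nth q tb e0 with (n0, _, n1, _) => if a then n1 else n0 end.
Definition tnu (tb : list Entry) q (a : bool) : list bool :=
  match nth q tb e0 with (_, o0, _, o1) => if a then o1 else o0 end.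
Fixpoint run_tbl tb q u : list bool :=
  match u with [] => [] | a :: u' => tnu tb q a ++ run_tbl tb (tdl tb q a) u' end.
Definition tbl (T : FST) : list Entry :=
  map (fun q => (dl T q false, nu T q false, dl T q true, nu T q true)) (seq 0 (nq T)).

Lemma nth_map_seq' {A} (f : nat -> A) n q d : q < n -> nth q (map f (seq 0 n)) d = f q.
Proof.
  intro Hq. rewrite nth_indep with (d' := f 0) by (rewrite length_map, length_seq; auto).
  rewrite map_nth, seq_nth by auto. reflexivity.
Qed.

Lemma nth_tbl T q : q < nq T ->
  nth q (tbl T) e0 = (dl T q false, nu T q false, dl T q true, nu T q true).
Proof.
  intro Hq. unfold tbl. exact (nth_map_seq' (fun q => (dl T q false, nu T q false, dl T q true, nu T q true)) (nq T) q e0 Hq).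
Qed.

Lemma run_tbl_eq T q u : FST_ok T -> q < nq T -> run_from T q u = run_tbl (tbl T) q u.
Proof.
  intros Hok. revert q; induction u as [|a u IH]; intros q Hq; simpl; auto.
  unfold tnu, tdl. rewrite nth_tbl by auto.
  destruct Hok as [_ [_ [H _]]].
  destruct a; rewrite IH; auto.
Qed.

Fixpoint bl n : list (list bool) :=
  match n with 0 => [[]] | S n => map (cons false) (bl n) ++ map (cons true) (bl n) end.

Lemma bl_in l : In l (bl (length l)).
Proof.
  induction l as [|a l IH]; simpl; auto. apply in_or_app.
  destruct a; [right|left]; apply in_map; auto.
Qed.

Lemma bl_len_in n l : In l (bl n) -> length l = n.
Proof.
  revert l; induction n; simpl; intros l H.
  - destruct H as [<-|[]]; auto.
  - apply in_app_or in H. destruct H as [H|H]; apply in_map_iff in H;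
    destruct H as [x [<- Hx]]; simpl; auto.
Qed.

Lemma bl_length n : length (bl n) = 2 ^ n.
Proof. induction n; simpl; auto. rewrite length_app, !length_map. lia. Qed.

Lemma NoDup_map_cons (b : bool) (L : list (list bool)) : NoDup L -> NoDup (map (cons b) L).
Proof.
  induction 1; simpl; constructor; auto.
  intro H1. apply in_map_iff in H1. destruct H1 as [y [E Hy]]. injection E; intros ->; auto.
Qed.

Lemma bl_nodup n : NoDup (bl n).
Proof.
  induction n; simpl. constructor; [simpl; tauto| constructor].
  apply NoDup_app; try apply NoDup_map_cons; auto.
  intros a H1 H2. apply in_map_iff in H1, H2.
  destruct H1 as [x [<- _]]. destruct H2 as [y [E _]]. discriminate.
Qed.

Definition U n := flat_map bl (seq 0 n).

Lemma U_in l n : length l < n -> In l (U n).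
Proof.
  intro H. unfold U. apply in_flat_map. exists (length l). split; [apply in_seq; lia| apply bl_in].
Qed.

Lemma U_len n : S (length (U n)) = 2 ^ n.
Proof.
  induction n; [reflexivity|].
  unfold U in *. rewrite seq_S, flat_map_app, length_app. simpl. rewrite app_nil_r, bl_length. lia.
Qed.

Fixpoint lists_of {A} (xs : list A) n : list (list A) :=
  match n with 0 => [[]] | S n => flat_map (fun x => map (cons x) (lists_of xs n)) xs end.

Lemma lists_in {A} (xs : list A) l : (forall x, In x l -> In x xs) -> In l (lists_of xs (length l)).
Proof.
  induction l as [|a l IH]; simpl; intros H; auto.
  apply in_flat_map. exists a. split; auto. apply in_map. auto.
Qed.

Definition ents k : list Entry :=
  list_prod (list_prod (list_prod (seq 0 k) (U (S k))) (seq 0 k)) (U (S k)).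
Definition Tables k := flat_map (lists_of (ents k)) (seq 0 (S k)).

Lemma tbl_in k T : FST_ok T -> FST_size T <= k -> In (tbl T) (Tables k).
Proof.
  intros Hok Hs. pose proof (nq_le_size T).
  unfold Tables. apply in_flat_map. exists (length (tbl T)).
  unfold tbl at 1. rewrite length_map, length_seq. split; [apply in_seq; lia|].
  apply lists_in. intros x Hx. unfold tbl in Hx. apply in_map_iff in Hx.
  destruct Hx as [q [<- Hq]]. apply in_seq in Hq.
  destruct Hok as [_ [_ [Hd _]]].
  pose proof (nu_le_size T q false ltac:(lia)). pose proof (nu_le_size T q true ltac:(lia)).
  pose proof (Hd q false ltac:(lia)). pose proof (Hd q true ltac:(lia)).
  unfold ents. repeat apply in_prod; try (apply in_seq; lia); apply U_in; lia.
Qed.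

Definition Bad k h L : list (list bool) :=
  map (fun x => match x with (tb, q, u, v) => v ++ firstn (L - length v) (run_tbl tb q u) end)
    (list_prod (list_prod (list_prod (Tables k) (seq 0 k)) (U h)) (U (S k))).

Lemma good_of k h w : k < length w -> ~ In w (Bad k h (length w)) -> good k h w.
Proof.
  intros HL Hn T q u d Hok Hs Hq Hd E.
  destruct (le_lt_dec h (length u)) as [|Hu]; auto. exfalso. apply Hn.
  pose proof (nq_le_size T).
  unfold Bad. apply in_map_iff. exists (tbl T, q, u, firstn d w). split.
  - rewrite length_firstn, Nat.min_l by lia. rewrite <- run_tbl_eq by auto. rewrite E.
    apply firstn_skipn.
  - repeat apply in_prod; try (apply in_seq; lia).
    + apply tbl_in; auto.
    + apply U_in; auto.
    + apply U_in. rewrite length_firstn. lia.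
Qed.

Lemma exists_good k : exists h w, 5 <= h /\ length w = 3 * h /\ k < length w /\ good k h w.
Proof.
  set (C := length (Tables k) * k * length (U (S k))).
  set (h := C + k + 5).
  assert (HB : length (Bad k h (3 * h)) < 2 ^ (3 * h)).
  { unfold Bad. rewrite length_map, !length_prod, length_seq.
    pose proof (U_len h). pose proof (Nat.pow_gt_lin_r 2 C ltac:(lia)).
    assert (2 ^ C <= 2 ^ h) by (apply Nat.pow_le_mono_r; lia).
    replace (3 * h) with (h + h + h) by lia. rewrite !Nat.pow_add_r.
    assert (1 <= 2 ^ h) by (apply Nat.le_succ_l, Nat.neq_0_lt_0, Nat.pow_nonzero; lia).
    fold C. nia. }
  destruct (classic (exists w, length w = 3 * h /\ ~ In w (Bad k h (3 * h)))) as [[w [Hw Hn]]|Hno].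
  - exists h, w. split; [lia|]. split; [lia|]. split; [lia|]. apply good_of; [lia|]. rewrite Hw; auto.
  - exfalso.
    assert (incl (bl (3 * h)) (Bad k h (3 * h))).
    { intros l Hl. apply bl_len_in in Hl. apply NNPP. intro. apply Hno. eauto. }
    pose proof (NoDup_incl_length (bl_nodup _) H). rewrite bl_length in H0. lia.
Qed.



Definition GW k : nat * list bool := epsilon (inhabits (0, []))
  (fun p => 5 <= fst p /\ length (snd p) = 3 * fst p /\ k < length (snd p) /\ good k (fst p) (snd p)).

Lemma GW_spec k : 5 <= fst (GW k) /\ length (snd (GW k)) = 3 * fst (GW k) /\
   k < length (snd (GW k)) /\ good k (fst (GW k)) (snd (GW k)).
Proof.
  unfold GW. apply epsilon_spec. destruct (exists_good k) as [h [w H]]. exists (h, w). exact H.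
Qed.

Definition kk j := j - Nat.sqrt j * Nat.sqrt j.

Lemma kk_inf k N : exists j, N <= j /\ kk j = k.
Proof.
  exists ((N + k) * (N + k) + k). split; [nia|]. unfold kk.
  rewrite (Nat.sqrt_unique _ (N + k)) by nia. lia.
Qed.

Fixpoint Pf j : list bool :=
  match j with 0 => [] | S j => Pf j ++ concat (repeat (snd (GW (kk j))) (length (Pf j) + 1)) end.

Definition Sq (i : nat) : bool := nth i (Pf (S i)) false.

Lemma Pf_prefix j j' : j <= j' -> exists z, Pf j' = Pf j ++ z.
Proof.
  induction 1. exists []; rewrite app_nil_r; auto.
  destruct IHle as [z Hz]. simpl. rewrite Hz, <- app_assoc. eauto.
Qed.

Lemma Pf_len j : j <= length (Pf j).
Proof.
  induction j; simpl; [lia|]. rewrite length_app.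
  replace (length (Pf j) + 1) with (S (length (Pf j))) by lia. simpl. rewrite length_app.
  pose proof (GW_spec (kk j)). lia.
Qed.

Lemma nth_Pf i j : i < length (Pf j) -> nth i (Pf j) false = Sq i.
Proof.
  intro H. unfold Sq.
  destruct (Pf_prefix j (max j (S i)) ltac:(lia)) as [z1 E1].
  destruct (Pf_prefix (S i) (max j (S i)) ltac:(lia)) as [z2 E2].
  pose proof (Pf_len (S i)).
  assert (nth i (Pf (max j (S i))) false = nth i (Pf j) false) by (rewrite E1, app_nth1; auto).
  assert (nth i (Pf (max j (S i))) false = nth i (Pf (S i)) false) by (rewrite E2, app_nth1; auto; lia).
  congruence.
Qed.

Lemma prefix_Pf j : prefix Sq (length (Pf j)) = Pf j.
Proof.
  unfold prefix. apply nth_ext with (d := false) (d' := false).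
  - rewrite length_map, length_seq; auto.
  - intros n Hn. rewrite length_map, length_seq in Hn.
    rewrite nth_indep with (d' := Sq 0) by (rewrite length_map, length_seq; auto).
    rewrite map_nth, seq_nth by auto. simpl. symmetry. apply nth_Pf; auto.
Qed.

Definition M (w : list bool) : FST :=
  mkFST 3 (fun q a => match q with 0 => if a then 2 else 1 | 1 => 0 | _ => 2 end)
          (fun q a => match q with 0 => [] | 1 => [a] | _ => w end) 0.

Lemma M_ok w : FST_ok (M w).
Proof.
  split; [simpl; lia|]. split; [simpl; lia|]. split.
  - intros q a Hq. simpl. destruct q as [|[|q]]; [destruct a| |]; lia.
  - intros q Hq. simpl in Hq. destruct q as [|[|[|q]]]; try lia.
    + exists []; reflexivity.
    + exists [false]; reflexivity.
    + exists [true]; reflexivity.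
Qed.

Lemma M_run w x r :
  run (M w) (flat_map (fun b => [false; b]) x ++ true :: repeat false r) = x ++ concat (repeat w r).
Proof.
  unfold run. simpl q0. induction x as [|b x IH].
  - simpl. induction r; simpl; auto. rewrite IHr. reflexivity.
  - simpl. rewrite IH. reflexivity.
Qed.

Lemma len_fm x : length (flat_map (fun b : bool => [false; b]) x) = 2 * length x.
Proof. induction x; simpl; auto. rewrite IHx. lia. Qed.

Lemma min_ex (P : nat -> Prop) : (exists m, P m) -> exists m, P m /\ forall m', P m' -> m <= m'.
Proof.
  intro H. destruct (dec_inh_nat_subset_has_unique_least_element P (fun n => classic (P n)) H)
    as [m [Hm _]]. eauto.
Qed.

Lemma FS_some k x a : FS k x = Some a -> FS_len k x a.
Proof.
  unfold FS. destruct excluded_middle_informative as [e|]; [|discriminate].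
  intro E. injection E as <-.
  apply (epsilon_spec (inhabits 0) (fun m => FS_len k x m /\ forall m', FS_len k x m' -> m <= m')).
  apply min_ex; auto.
Qed.

Lemma FS_upper k x m : FS_len k x m -> exists a, FS k x = Some a /\ a <= m.
Proof.
  intro Hm. unfold FS. destruct excluded_middle_informative as [e|n]; [|exfalso; eauto].
  eexists; split; [reflexivity|].
  apply (epsilon_spec (inhabits 0) (fun m => FS_len k x m /\ forall m', FS_len k x m' -> m <= m')).
  apply min_ex; auto. auto.
Qed.

Theorem theorem3 : exists S : nat -> bool, fs_deep S.
Proof.
  exists Sq. exists (1/12)%R. split; [lra|].
  intro k. destruct (GW_spec k) as [Hh [HL [Hk Hg]]].
  set (h := fst (GW k)) in *. set (w := snd (GW k)) in *.
  exists (FST_size (M w)). intro N.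
  destruct (kk_inf k N) as [j [Hj Hkj]].
  exists (length (Pf (S j))). split; [pose proof (Pf_len (S j)); lia|].
  rewrite prefix_Pf. set (x := Pf (S j)).
  set (N0 := length (Pf j)). set (r := N0 + 1).
  assert (Ex : x = Pf j ++ concat (repeat w r)) by (unfold x; simpl; rewrite Hkj; reflexivity).
  assert (Hn : length x = N0 + r * (3 * h)).
  { rewrite Ex, length_app. fold N0. f_equal. clear -HL. induction r; simpl; auto.
    rewrite length_app, IHr. lia. }
  destruct (FS_upper (FST_size (M w)) x (2 * N0 + 1 + r)) as [a' [Ha' Ha'le]].
  { exists (M w), (flat_map (fun b => [false; b]) (Pf j) ++ true :: repeat false r).
    split; [apply M_ok|]. split; [lia|]. split.
    - rewrite M_run. auto.
    - rewrite length_app, len_fm. simpl. rewrite repeat_length. fold N0. lia. }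
  unfold FS_gap_ge. rewrite Ha'. destruct (FS k x) as [a|] eqn:Ha; [|exact I].
  apply FS_some in Ha. destruct Ha as [T [p [Hok [Hsz [Hrun Hp]]]]].
  assert (Hlb : r * h <= a).
  { pose proof Hok as [_ [Hq0 _]].
    unfold run in Hrun.
    destruct (split_run k T Hok Hsz p (q0 T) N0 Hq0) as [p1 [p2 [Ep Hb]]].
    { rewrite Hrun, Ex, length_app. fold N0. lia. }
    subst p. rewrite run_from_app in Hrun.
    assert (E2 := f_equal (skipn (length (run_from T (q0 T) p1))) Hrun).
    rewrite skipn_app, Nat.sub_diag, skipn_O, skipn_all in E2. simpl in E2.
    rewrite Ex, skipn_app in E2. fold N0 in E2.
    rewrite skipn_all2 in E2 by lia. simpl in E2.
    rewrite <- (app_nil_r (concat (repeat w r))) in E2.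
    pose proof (main_lb k T Hok Hsz h w Hg Hk r p2 _ _ [] (dfold_lt T _ p1 Hok Hq0)
                  (ltac:(lia) : length (run_from T (q0 T) p1) - N0 <= k) E2).
    rewrite <- Hp, length_app. lia. }
  assert (Hnat : 12 * a' + length x <= 12 * a) by nia.
  apply Rle_ge. apply le_INR in Hnat. rewrite plus_INR, !mult_INR in Hnat. simpl in Hnat.
  replace (INR 12) with 12%R in Hnat by (simpl; lra). lra.
Qed.
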